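(* Let $A\in\mathbb{C}^{m\times n}$ have rank $r$ and $B\in\mathbb{C}^{m\times n}$ have rank $s$, with singular value decompositions $$A=U\begin{pmatrix}\Sigma_{1}&0\\0&0\end{pmatrix}V^{\ast}=U_{1}\Sigma_{1}V_{1}^{\ast},\qquad B=\widetilde{U}\begin{pmatrix}\widetilde{\Sigma}_{1}&0\\0&0\end{pmatrix}\widetilde{V}^{\ast}=\widetilde{U}_{1}\widetilde{\Sigma}_{1}\widetilde{V}_{1}^{\ast},$$ where $U=(U_{1},U_{2})$ and $\widetilde{U}=(\widetilde{U}_{1},\widetilde{U}_{2})$ are $m\times m$ unitary, $V=(V_{1},V_{2})$ and $\widetilde{V}=(\widetilde{V}_{1},\widetilde{V}_{2})$ are $n\times n$ unitary, $U_{1}\in\mathbb{C}^{m\times r}$, $V_{1}\in\mathbb{C}^{n\times r}$, $\widetilde{U}_{1}\in\mathbb{C}^{m\times s}$, $\widetilde{V}_{1}\in\mathbb{C}^{n\times s}$, $\Sigma_{1}=\operatorname{diag}(\sigma_{1},\ldots,\sigma_{r})$ with $\sigma_{1}\geq\cdots\geq\sigma_{r}>0$, and $\widetilde{\Sigma}_{1}=\operatorname{diag}(\widetilde{\sigma}_{1},\ldots,\widetilde{\sigma}_{s})$ with $\widetilde{\sigma}_{1}\geq\cdots\geq\widetilde{\sigma}_{s}>0$. Let $E=B-A$. Then $$\|B^{\dagger}-A^{\dagger}\|_{F}^{2}\leq\|B^{\dagger}\|_{2}^{2}\|\widetilde{U}_{1}^{\ast}U_{2}\|_{F}^{2}+\|A^{\dagger}\|_{2}^{2}\|\widetilde{V}_{2}^{\ast}V_{1}\|_{F}^{2}+\|B^{\dagger}EA^{\dagger}\|_{F}^{2},$$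 $$\|B^{\dagger}-A^{\dagger}\|_{F}^{2}\leq\|A^{\dagger}\|_{2}^{2}\|\widetilde{U}_{2}^{\ast}U_{1}\|_{F}^{2}+\|B^{\dagger}\|_{2}^{2}\|\widetilde{V}_{1}^{\ast}V_{2}\|_{F}^{2}+\|A^{\dagger}EB^{\dagger}\|_{F}^{2},$$ and $$\|B^{\dagger}-A^{\dagger}\|_{F}^{2}\geq\frac{\|\widetilde{U}_{1}^{\ast}U_{2}\|_{F}^{2}}{\|B\|_{2}^{2}}+\frac{\|\widetilde{V}_{2}^{\ast}V_{1}\|_{F}^{2}}{\|A\|_{2}^{2}}+\|B^{\dagger}EA^{\dagger}\|_{F}^{2},$$ $$\|B^{\dagger}-A^{\dagger}\|_{F}^{2}\geq\frac{\|\widetilde{U}_{2}^{\ast}U_{1}\|_{F}^{2}}{\|A\|_{2}^{2}}+\frac{\|\widetilde{V}_{1}^{\ast}V_{2}\|_{F}^{2}}{\|B\|_{2}^{2}}+\|A^{\dagger}EB^{\dagger}\|_{F}^{2}.$$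
   Context: $M^{\dagger}$ denotes the Moore–Penrose inverse of $M$, $M^{\ast}$ the conjugate transpose, $\|\cdot\|_{2}$ the spectral norm and $\|\cdot\|_{F}$ the Frobenius norm. *)

(* Defs.v *)
From HB Require Import structures.
From mathcomp Require Import all_boot all_order all_algebra.
From mathcomp Require Import complex.
From mathcomp Require Import boolp classical_sets reals.
Set Implicit Arguments. Unset Strict Implicit. Unset Printing Implicit Defensive.
Import Order.TTheory GRing.Theory Num.Theory.
Local Open Scope ring_scope.

Section Defs.
Variable R : realType.
Local Notation C := R[i].

Definition ctrmx (m n : nat) (M : 'M[C]_(m, n)) : 'M[C]_(n, m) :=
  (map_mx conjc M)^T.

Definition cabs2 (z : C) : R := (complex.Re z) ^+ 2 + (complex.Im z) ^+ 2.

Definition frob (m n : nat) (M : 'M[C]_(m, n)) : R :=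
  Num.sqrt (\sum_(i < m) \sum_(j < n) cabs2 (M i j)).

(* spectral norm ||M||_2 = sup { ||M x||_2 : ||x||_2 <= 1 }
   (the Euclidean norm of a column vector is its Frobenius norm) *)
Definition specn (m n : nat) (M : 'M[C]_(m, n)) : R :=
  sup [set frob (M *m x) | x in [set x : 'cV[C]_n | frob x <= 1]].

Definition is_pinv (m n : nat) (M : 'M[C]_(m, n)) (X : 'M[C]_(n, m)) : Prop :=
  [/\ M *m X *m M = M, X *m M *m X = X,
      ctrmx (M *m X) = M *m X & ctrmx (X *m M) = X *m M].

Definition pinv (m n : nat) (M : 'M[C]_(m, n)) : 'M[C]_(n, m) :=
  xget 0 [set X | is_pinv M X].

Definition unitary (m k : nat) (U : 'M[C]_(m, k)) : Prop :=
  ctrmx U *m U = 1%:M /\ U *m ctrmx U = 1%:M.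

Definition svd (m n r : nat) (M : 'M[C]_(m, n))
  (U1 : 'M[C]_(m, r)) (U2 : 'M[C]_(m, m - r))
  (V1 : 'M[C]_(n, r)) (V2 : 'M[C]_(n, n - r)) (sigma : 'rV[R]_r) : Prop :=
  [/\ unitary (row_mx U1 U2), unitary (row_mx V1 V2),
      (forall i : 'I_r, 0 < sigma 0 i),
      (forall i j : 'I_r, (i <= j)%N -> sigma 0 j <= sigma 0 i) &
      M = U1 *m diag_mx (map_mx (fun x => (x%:C)%C) sigma) *m ctrmx V1].

End Defs.

(* Main.v *)
Require Import Defs.
From HB Require Import structures.
From mathcomp Require Import all_boot all_order all_algebra.
From mathcomp Require Import complex.
From mathcomp Require Import boolp classical_sets reals.
From mathcomp Require Import ring lra.
Import Order.TTheory GRing.Theory Num.Theory.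
Local Open Scope ring_scope.
Set Implicit Arguments. Unset Strict Implicit. Unset Printing Implicit Defensive.

Section S.
Variable R : realType.
Local Notation C := R[i].

Lemma conjc_mul_self (z : C) : (z^* * z)%C = ((cabs2 z)%:C)%C.
Proof.
case: z => a b; rewrite /cabs2 /=; apply/eqP; rewrite eq_complex /=.
by apply/andP; split; apply/eqP; ring.
Qed.

Lemma cabs2_ge0 (z : C) : 0 <= cabs2 z.
Proof. rewrite /cabs2; apply: addr_ge0; apply: sqr_ge0. Qed.

Lemma ctrmxK m n (M : 'M[C]_(m, n)) : ctrmx (ctrmx M) = M.
Proof. by apply/matrixP=> i j; rewrite /ctrmx !mxE conjcK. Qed.

Lemma ctrmx_mul m n p (M : 'M[C]_(m, n)) (N : 'M[C]_(n, p)) :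
  ctrmx (M *m N) = ctrmx N *m ctrmx M.
Proof. by rewrite /ctrmx map_mxM trmx_mul. Qed.

Lemma ctrmxD m n (M N : 'M[C]_(m, n)) : ctrmx (M + N) = ctrmx M + ctrmx N.
Proof. by rewrite /ctrmx map_mxD linearD. Qed.

Lemma ctrmxN m n (M : 'M[C]_(m, n)) : ctrmx (- M) = - ctrmx M.
Proof. by rewrite /ctrmx map_mxN linearN. Qed.

Lemma ctrmx1 n : ctrmx (1%:M : 'M[C]_n) = 1%:M.
Proof. by rewrite /ctrmx map_mx1 trmx1. Qed.

Lemma ctrmx_row m n1 n2 (X : 'M[C]_(m, n1)) (Y : 'M[C]_(m, n2)) :
  ctrmx (row_mx X Y) = col_mx (ctrmx X) (ctrmx Y).
Proof. by rewrite /ctrmx map_row_mx tr_row_mx. Qed.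

Definition fsq m n (M : 'M[C]_(m, n)) : R := \sum_(i < m) \sum_(j < n) cabs2 (M i j).

Lemma fsq_ge0 m n (M : 'M[C]_(m, n)) : 0 <= fsq M.
Proof. by apply: sumr_ge0 => i _; apply: sumr_ge0 => j _; apply: cabs2_ge0. Qed.

Lemma frob2 m n (M : 'M[C]_(m, n)) : frob M ^+ 2 = fsq M.
Proof. by rewrite /frob sqr_sqrtr // fsq_ge0. Qed.

Lemma fsq_tr m n (M : 'M[C]_(m, n)) : ((fsq M)%:C)%C = \tr (ctrmx M *m M).
Proof.
rewrite /fsq /mxtrace exchange_big rmorph_sum /=; apply: eq_bigr => j _.
rewrite rmorph_sum mxE; apply: eq_bigr => i _.
by rewrite /ctrmx !mxE conjc_mul_self.
Qed.


Lemma fsq_mulU m n p (U : 'M[C]_(m, n)) (M : 'M[C]_(n, p)) :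
  ctrmx U *m U = 1%:M -> fsq (U *m M) = fsq M.
Proof.
move=> H; apply: (@complexI R); rewrite !fsq_tr ctrmx_mul -mulmxA (mulmxA (ctrmx U)).
by rewrite H mul1mx.
Qed.

Lemma fsq_mulW m n p (M : 'M[C]_(m, n)) (W : 'M[C]_(n, p)) :
  W *m ctrmx W = 1%:M -> fsq (M *m W) = fsq M.
Proof.
move=> H; apply: (@complexI R); rewrite !fsq_tr ctrmx_mul -mulmxA mxtrace_mulC.
by rewrite -!mulmxA H mulmx1.
Qed.

Lemma fsq_ctr m n (M : 'M[C]_(m, n)) : fsq (ctrmx M) = fsq M.
Proof. by apply: (@complexI R); rewrite !fsq_tr ctrmxK mxtrace_mulC. Qed.

Lemma fsqN m n (M : 'M[C]_(m, n)) : fsq (- M) = fsq M.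
Proof. by apply: (@complexI R); rewrite !fsq_tr ctrmxN mulNmx mulmxN opprK. Qed.

Lemma fsq0 m n : fsq (0 : 'M[C]_(m, n)) = 0.
Proof.
apply: (@complexI R); rewrite fsq_tr mulmx0 mxtrace0.
by rewrite (rmorph0 (real_complex R)).
Qed.

Lemma ctrmx_col m1 m2 n (X : 'M[C]_(m1, n)) (Y : 'M[C]_(m2, n)) :
  ctrmx (col_mx X Y) = row_mx (ctrmx X) (ctrmx Y).
Proof. by rewrite /ctrmx map_col_mx tr_col_mx. Qed.

Lemma fsq_col m1 m2 n (X : 'M[C]_(m1, n)) (Y : 'M[C]_(m2, n)) :
  fsq (col_mx X Y) = fsq X + fsq Y.
Proof.
apply: (@complexI R); rewrite fsq_tr ctrmx_col mul_row_col mxtraceD -!fsq_tr.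
by rewrite rmorphD.
Qed.

Lemma fsq_row m n1 n2 (X : 'M[C]_(m, n1)) (Y : 'M[C]_(m, n2)) :
  fsq (row_mx X Y) = fsq X + fsq Y.
Proof. by rewrite -fsq_ctr ctrmx_row fsq_col !fsq_ctr. Qed.

Definition dC k (d : 'rV[R]_k) : 'rV[C]_k := map_mx (fun x => (x%:C)%C) d.

Lemma cabs2_real_mul (x : R) (z : C) : cabs2 ((x%:C)%C * z) = x ^+ 2 * cabs2 z.
Proof. by case: z => a b; rewrite /cabs2 /=; ring. Qed.

Lemma fsq_diag k n (d : 'rV[R]_k) (X : 'M[C]_(k, n)) :
  fsq (diag_mx (dC d) *m X) = \sum_(i < k) d 0 i ^+ 2 * \sum_(j < n) cabs2 (X i j).
Proof.
rewrite /fsq mul_diag_mx; apply: eq_bigr => i _; rewrite mulr_sumr.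
by apply: eq_bigr => j _; rewrite !mxE cabs2_real_mul.
Qed.

Lemma fsq_diag_le k n (d : 'rV[R]_k) (X : 'M[C]_(k, n)) c :
  (forall i, d 0 i ^+ 2 <= c) -> fsq (diag_mx (dC d) *m X) <= c * fsq X.
Proof.
move=> H; rewrite fsq_diag /fsq mulr_sumr; apply: ler_sum => i _.
by apply: ler_wpM2r => //; apply: sumr_ge0 => j _; apply: cabs2_ge0.
Qed.

Lemma fsq_diag_ge k n (d : 'rV[R]_k) (X : 'M[C]_(k, n)) c :
  (forall i, c <= d 0 i ^+ 2) -> c * fsq X <= fsq (diag_mx (dC d) *m X).
Proof.
move=> H; rewrite fsq_diag /fsq mulr_sumr; apply: ler_sum => i _.
by apply: ler_wpM2r => //; apply: sumr_ge0 => j _; apply: cabs2_ge0.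
Qed.

Lemma ctrmx_diag k (d : 'rV[R]_k) : ctrmx (diag_mx (dC d)) = diag_mx (dC d).
Proof.
apply/matrixP => i j; rewrite /ctrmx !mxE.
case: (eqVneq i j) => [->|ne]; first by rewrite !mulr1n conjc_real.
by rewrite !mulr0n conjc0.
Qed.

Lemma fsq_diagr k n (d : 'rV[R]_k) (X : 'M[C]_(n, k)) :
  fsq (X *m diag_mx (dC d)) = fsq (diag_mx (dC d) *m ctrmx X).
Proof. by rewrite -fsq_ctr ctrmx_mul ctrmx_diag. Qed.


Lemma unitary_blocks m p q (X : 'M[C]_(m, p)) (Y : 'M[C]_(m, q)) :
  unitary (row_mx X Y) ->
  [/\ ctrmx X *m X = 1%:M, ctrmx X *m Y = 0, ctrmx Y *m X = 0,
      ctrmx Y *m Y = 1%:M & X *m ctrmx X + Y *m ctrmx Y = 1%:M].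
Proof.
case=> H1 H2; move: H1; rewrite ctrmx_row mul_col_row scalar_mx_block.
case/eq_block_mx => h1 h2 h3 h4; split => //.
by rewrite -mul_row_col -ctrmx_row.
Qed.

Lemma is_pinv_unique m n (A : 'M[C]_(m, n)) X Y :
  is_pinv A X -> is_pinv A Y -> X = Y.
Proof.
case=> hX1 hX2 hX3 hX4 [hY1 hY2 hY3 hY4].
have eX : X = X *m A *m Y.
  have h1 : A *m X = ctrmx X *m ctrmx A by rewrite -ctrmx_mul hX3.
  have h2 : ctrmx A = ctrmx A *m (A *m Y) by rewrite -{1}hY1 ctrmx_mul hY3.
  rewrite -{1}hX2 -mulmxA h1 h2 (mulmxA (ctrmx X)) -ctrmx_mul hX3.
  by rewrite !mulmxA hX2.
have eY : Y = X *m A *m Y.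
  have h3 : Y *m A = ctrmx A *m ctrmx Y by rewrite -ctrmx_mul hY4.
  have h4 : ctrmx A = (X *m A) *m ctrmx A.
    by rewrite -{1}hX1 -mulmxA ctrmx_mul hX4.
  rewrite -{1}hY2 h3 h4 -(mulmxA (X *m A)) -ctrmx_mul hY4.
  by rewrite -(mulmxA (X *m A)) hY2.
by rewrite {1}eX -eY.
Qed.

Lemma pinvE m n (A : 'M[C]_(m, n)) X : is_pinv A X -> pinv A = X.
Proof.
move=> hX; apply: (@is_pinv_unique _ _ A) => //.
by rewrite /pinv; apply: (@xgetI _ 0 [set X | is_pinv A X] X).
Qed.


Lemma cabs2_nat (b : bool) : cabs2 (b%:R : C) = b%:R.
Proof. by case: b; rewrite /cabs2 /= ?expr1n ?expr0n /= ?addr0. Qed.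

Lemma sum_delta k (i : 'I_k) (a : 'I_k -> R) :
  \sum_(l < k) a l * \sum_(j < 1) cabs2 ((delta_mx i 0 : 'cV[C]_k) l j) = a i.
Proof.
rewrite (bigD1 i) //= [X in _ + X]big1 ?addr0.
  by rewrite big_ord1 mxE !eqxx cabs2_nat mulr1.
move=> l nli; rewrite big_ord1 mxE (negPf nli) /=.
by rewrite (cabs2_nat false) mulr0.
Qed.

Lemma fsq_delta k (i : 'I_k) : fsq (delta_mx i 0 : 'cV[C]_k) = 1.
Proof.
rewrite -[RHS](sum_delta i (fun _ => 1)); rewrite /fsq.
by apply: eq_bigr => l _; rewrite mul1r.
Qed.

Lemma frob_sqrt m n (M : 'M[C]_(m, n)) : frob M = Num.sqrt (fsq M).
Proof. by []. Qed.

Lemma specn_ge a b k q (W1 : 'M[C]_(a, k)) (d : 'rV[R]_k) (Z1 : 'M[C]_(b, k))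
  (Z2 : 'M[C]_(b, q)) :
  ctrmx W1 *m W1 = 1%:M -> unitary (row_mx Z1 Z2) -> (forall i, 0 <= d 0 i) ->
  forall i, d 0 i <= specn (W1 *m diag_mx (dC d) *m ctrmx Z1).
Proof.
move=> hW hZ hd i.
have [z11 z12 z21 z22 zz] := unitary_blocks hZ.
set c := \sum_(l < k) d 0 l.
have c0 : 0 <= c by apply: sumr_ge0 => l _.
have dc : forall l, d 0 l ^+ 2 <= c ^+ 2.
  move=> l; rewrite ler_sqr ?nnegrE //.
  by rewrite /c (bigD1 l) //= lerDl; apply: sumr_ge0 => j _.
apply: ub_le_sup.
  exists c => y [x /= hx <-].
  rewrite frob_sqrt -(ger0_norm c0) -sqrtr_sqr ler_sqrt ?exprn_ge0 //.
  rewrite -!mulmxA fsq_mulU // (le_trans (fsq_diag_le _ dc)) //.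
  rewrite -[leRHS]mulr1 ler_wpM2l ?exprn_ge0 //.
  have hx2 : fsq x <= 1.
    by move: hx; rewrite frob_sqrt -{1}sqrtr1 ler_sqrt.
  apply: le_trans hx2.
  have -> : fsq x = fsq (ctrmx (row_mx Z1 Z2) *m x).
    by rewrite fsq_mulU // ctrmxK; case: hZ.
  by rewrite ctrmx_row mul_col_mx fsq_col lerDl fsq_ge0.
exists (Z1 *m delta_mx i 0) => /=.
  by rewrite frob_sqrt fsq_mulU // fsq_delta sqrtr1.
rewrite frob_sqrt -!mulmxA (mulmxA (ctrmx Z1)) z11 mul1mx fsq_mulU //.
by rewrite fsq_diag sum_delta sqrtr_sqr ger0_norm.
Qed.


Definition rinv k (d : 'rV[R]_k) : 'rV[R]_k := \row_j (d 0 j)^-1.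

Lemma diag_inv k (d : 'rV[R]_k) : (forall i, 0 < d 0 i) ->
  diag_mx (dC d) *m diag_mx (dC (rinv d)) = 1%:M /\
  diag_mx (dC (rinv d)) *m diag_mx (dC d) = 1%:M.
Proof.
move=> hd; rewrite !mulmx_diag -!diag_const_mx; split; congr diag_mx;
  apply/rowP => j; rewrite !mxE -rmorphM.
  by rewrite mulfV ?gt_eqF.
by rewrite mulVf ?gt_eqF.
Qed.

Lemma canc m p q (P : 'M[C]_(m, p)) (Q : 'M[C]_(p, m)) :
  P *m Q = 1%:M -> forall (M : 'M[C]_(m, q)), P *m (Q *m M) = M.
Proof. by move=> h M; rewrite mulmxA h mul1mx. Qed.

Lemma canc0 m p k q (P : 'M[C]_(m, p)) (Q : 'M[C]_(p, k)) :
  P *m Q = 0 -> forall (M : 'M[C]_(k, q)), P *m (Q *m M) = 0.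
Proof. by move=> h M; rewrite mulmxA h mul0mx. Qed.

Lemma pinv_svd m n r (A : 'M[C]_(m, n)) U1 U2 V1 V2 (sigma : 'rV[R]_r) :
  svd A U1 U2 V1 V2 sigma ->
  pinv A = V1 *m diag_mx (dC (rinv sigma)) *m ctrmx U1.
Proof.
case=> hU hV hs _ hA.
have [u11 u12 u21 u22 uu] := unitary_blocks hU.
have [v11 v12 v21 v22 vv] := unitary_blocks hV.
have [s1 s2] := diag_inv hs.
have u11' := canc u11; have v11' := canc v11.
have s1' := canc s1; have s2' := canc s2.
apply: pinvE; rewrite hA -/(dC sigma).
have AX : U1 *m diag_mx (dC sigma) *m ctrmx V1 *m
            (V1 *m diag_mx (dC (rinv sigma)) *m ctrmx U1) = U1 *m ctrmx U1.
  by rewrite -!mulmxA v11' s1'.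
have XA : V1 *m diag_mx (dC (rinv sigma)) *m ctrmx U1 *m
            (U1 *m diag_mx (dC sigma) *m ctrmx V1) = V1 *m ctrmx V1.
  by rewrite -!mulmxA u11' s2'.
split.
- by rewrite AX -!mulmxA u11'.
- by rewrite XA -!mulmxA v11'.
- by rewrite AX ctrmx_mul ctrmxK.
- by rewrite XA ctrmx_mul ctrmxK.
Qed.


Lemma decomp m n r s (A B : 'M[C]_(m, n))
  U1 U2 V1 V2 (sigma : 'rV[R]_r) Ut1 Ut2 Vt1 Vt2 (sigmat : 'rV[R]_s) :
  svd A U1 U2 V1 V2 sigma -> svd B Ut1 Ut2 Vt1 Vt2 sigmat ->
  fsq (pinv B - pinv A) =
    fsq (pinv B *m (B - A) *m pinv A)
    + fsq (diag_mx (dC (rinv sigmat)) *m (ctrmx Ut1 *m U2))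
    + fsq ((ctrmx Vt2 *m V1) *m diag_mx (dC (rinv sigma))).
Proof.
move=> hA hB.
have pA := pinv_svd hA; have pB := pinv_svd hB.
case: hA => hU hV hs _ eA; case: hB => hUt hVt hst _ eB.
have [u11 u12 u21 u22 uu] := unitary_blocks hU.
have [v11 v12 v21 v22 vv] := unitary_blocks hV.
have [ut11 ut12 ut21 ut22 uut] := unitary_blocks hUt.
have [vt11 vt12 vt21 vt22 vvt] := unitary_blocks hVt.
have [s1 s2] := diag_inv hs.
have [st1 st2] := diag_inv hst.
have u11' := canc u11; have v11' := canc v11.
have ut11' := canc ut11; have vt11' := canc vt11.
have s1' := canc s1; have s2' := canc s2.
have st1' := canc st1; have st2' := canc st2.
have u12' := canc0 u12; have vt21' := canc0 vt21.
set Sa := diag_mx (dC sigma); set Sai := diag_mx (dC (rinv sigma)).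
set Sb := diag_mx (dC sigmat); set Sbi := diag_mx (dC (rinv sigmat)).
rewrite -/(dC sigma) -/Sa in eA; rewrite -/(dC sigmat) -/Sb in eB.
rewrite -/Sai in pA; rewrite -/Sbi in pB.
have -> : pinv B *m (B - A) *m pinv A =
    Vt1 *m (ctrmx Vt1 *m (V1 *m Sai) - Sbi *m (ctrmx Ut1 *m U1)) *m ctrmx U1.
  rewrite pA pB eA eB !mulmxBr !mulmxBl -!mulmxA ?ut11' ?st2' ?u11' ?v11' ?s1'.
  reflexivity.
rewrite fsq_mulW; last by rewrite ctrmxK.
rewrite fsq_mulU // -(fsqN (ctrmx Vt1 *m _ - _)) opprB.
have -> : fsq (pinv B - pinv A) =
   fsq (ctrmx (row_mx Vt1 Vt2) *m (pinv B - pinv A) *m row_mx U1 U2).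
  rewrite fsq_mulW; last by case: hU.
  by rewrite fsq_mulU // ctrmxK; case: hVt.
rewrite ctrmx_row !mul_col_mx !mul_mx_row fsq_col !fsq_row.
rewrite pA pB !mulmxBr !mulmxBl -!mulmxA ?vt11' ?vt21' ?u12' ?u11 ?u12 ?mulmx0 ?mulmx1.
by rewrite subr0 !sub0r fsqN oppr0 fsq0 addr0.
Qed.

Lemma lin1 (k p q a b : R) : p <= a -> q <= b -> k + p + q <= a + b + k.
Proof. move=> h1 h2; lra. Qed.

Lemma lin2 (k p q a b : R) : a <= p -> b <= q -> a + b + k <= k + p + q.
Proof. move=> h1 h2; lra. Qed.

Lemma bounds m n r s (A B : 'M[C]_(m, n))
  U1 U2 V1 V2 (sigma : 'rV[R]_r) Ut1 Ut2 Vt1 Vt2 (sigmat : 'rV[R]_s) :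
  svd A U1 U2 V1 V2 sigma -> svd B Ut1 Ut2 Vt1 Vt2 sigmat ->
  fsq (pinv B - pinv A) <=
    specn (pinv B) ^+ 2 * fsq (ctrmx Ut1 *m U2)
    + specn (pinv A) ^+ 2 * fsq (ctrmx Vt2 *m V1)
    + fsq (pinv B *m (B - A) *m pinv A) /\
  fsq (ctrmx Ut1 *m U2) / specn B ^+ 2
    + fsq (ctrmx Vt2 *m V1) / specn A ^+ 2
    + fsq (pinv B *m (B - A) *m pinv A) <= fsq (pinv B - pinv A).
Proof.
move=> hA hB.
have eD := decomp hA hB.
have pA := pinv_svd hA; have pB := pinv_svd hB.
case: hA => hU hV hs _ eA; case: hB => hUt hVt hst _ eB.
have [u11 u12 u21 u22 uu] := unitary_blocks hU.
have [v11 v12 v21 v22 vv] := unitary_blocks hV.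
have [ut11 ut12 ut21 ut22 uut] := unitary_blocks hUt.
have [vt11 vt12 vt21 vt22 vvt] := unitary_blocks hVt.
have hsi : forall i, 0 <= (rinv sigma) 0 i by move=> i; rewrite mxE invr_ge0 ltW.
have hsti : forall i, 0 <= (rinv sigmat) 0 i by move=> i; rewrite mxE invr_ge0 ltW.
have hs0 : forall i, 0 <= sigma 0 i by move=> i; rewrite ltW.
have hst0 : forall i, 0 <= sigmat 0 i by move=> i; rewrite ltW.
have gA := specn_ge u11 hV hs0; rewrite -eA in gA.
have gB := specn_ge ut11 hVt hst0; rewrite -eB in gB.
have gAi := specn_ge v11 hU hsi; rewrite -pA in gAi.
have gBi := specn_ge vt11 hUt hsti; rewrite -pB in gBi.
split.
- have h1 : fsq (diag_mx (dC (rinv sigmat)) *m (ctrmx Ut1 *m U2))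
      <= specn (pinv B) ^+ 2 * fsq (ctrmx Ut1 *m U2).
    apply: fsq_diag_le => i; rewrite ler_sqr ?nnegrE //.
    exact: le_trans (hsti i) (gBi i).
  have h2 : fsq (ctrmx Vt2 *m V1 *m diag_mx (dC (rinv sigma)))
      <= specn (pinv A) ^+ 2 * fsq (ctrmx Vt2 *m V1).
    rewrite fsq_diagr -(fsq_ctr (ctrmx Vt2 *m V1)).
    apply: fsq_diag_le => i; rewrite ler_sqr ?nnegrE //.
    exact: le_trans (hsi i) (gAi i).
  by rewrite eD; apply: lin1.
- have h1 : fsq (ctrmx Ut1 *m U2) / specn B ^+ 2
      <= fsq (diag_mx (dC (rinv sigmat)) *m (ctrmx Ut1 *m U2)).
    rewrite mulrC; apply: fsq_diag_ge => i; rewrite mxE exprVn.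
    have p := hst i; have q := gB i.
    have sB := lt_le_trans p q.
    by rewrite lef_pV2 ?posrE ?exprn_gt0 // ler_sqr ?nnegrE ?(ltW p) ?(ltW sB).
  have h2 : fsq (ctrmx Vt2 *m V1) / specn A ^+ 2
      <= fsq (ctrmx Vt2 *m V1 *m diag_mx (dC (rinv sigma))).
    rewrite fsq_diagr -(fsq_ctr (ctrmx Vt2 *m V1)).
    rewrite mulrC; apply: fsq_diag_ge => i; rewrite mxE exprVn.
    have p := hs i; have q := gA i.
    have sB := lt_le_trans p q.
    by rewrite lef_pV2 ?posrE ?exprn_gt0 // ler_sqr ?nnegrE ?(ltW p) ?(ltW sB).
  by rewrite eD; apply: lin2.
Qed.

End S.

Theorem corollary2p3 (R : realType) (m n r s : nat)
  (A B : 'M[R[i]]_(m, n))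
  (U1 : 'M[R[i]]_(m, r)) (U2 : 'M[R[i]]_(m, m - r))
  (V1 : 'M[R[i]]_(n, r)) (V2 : 'M[R[i]]_(n, n - r)) (sigma : 'rV[R]_r)
  (Ut1 : 'M[R[i]]_(m, s)) (Ut2 : 'M[R[i]]_(m, m - s))
  (Vt1 : 'M[R[i]]_(n, s)) (Vt2 : 'M[R[i]]_(n, n - s)) (sigmat : 'rV[R]_s) :
  \rank A = r -> \rank B = s ->
  svd A U1 U2 V1 V2 sigma ->
  svd B Ut1 Ut2 Vt1 Vt2 sigmat ->
  let E := B - A in
  [/\ frob (pinv B - pinv A) ^+ 2 <=
        specn (pinv B) ^+ 2 * frob (ctrmx Ut1 *m U2) ^+ 2
        + specn (pinv A) ^+ 2 * frob (ctrmx Vt2 *m V1) ^+ 2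
        + frob (pinv B *m E *m pinv A) ^+ 2,
      frob (pinv B - pinv A) ^+ 2 <=
        specn (pinv A) ^+ 2 * frob (ctrmx Ut2 *m U1) ^+ 2
        + specn (pinv B) ^+ 2 * frob (ctrmx Vt1 *m V2) ^+ 2
        + frob (pinv A *m E *m pinv B) ^+ 2,
      frob (ctrmx Ut1 *m U2) ^+ 2 / specn B ^+ 2
        + frob (ctrmx Vt2 *m V1) ^+ 2 / specn A ^+ 2
        + frob (pinv B *m E *m pinv A) ^+ 2
        <= frob (pinv B - pinv A) ^+ 2 &
      frob (ctrmx Ut2 *m U1) ^+ 2 / specn A ^+ 2
        + frob (ctrmx Vt1 *m V2) ^+ 2 / specn B ^+ 2
        + frob (pinv A *m E *m pinv B) ^+ 2
        <= frob (pinv B - pinv A) ^+ 2].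
Proof.
move=> _ _ hA hB E; rewrite /E !frob2.
have [b1 b3] := bounds hA hB.
have [b2 b4] := bounds hB hA.
have eN : fsq (pinv A - pinv B) = fsq (pinv B - pinv A) by rewrite -fsqN opprB.
have eE : fsq (pinv A *m (A - B) *m pinv B) = fsq (pinv A *m (B - A) *m pinv B).
  by rewrite -(opprB B A) mulmxN mulNmx fsqN.
have c1 : fsq (ctrmx U1 *m Ut2) = fsq (ctrmx Ut2 *m U1).
  by rewrite -fsq_ctr ctrmx_mul ctrmxK.
have c2 : fsq (ctrmx V2 *m Vt1) = fsq (ctrmx Vt1 *m V2).
  by rewrite -fsq_ctr ctrmx_mul ctrmxK.
rewrite eN eE c1 c2 in b2 b4.
by split.
Qed.
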